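(* Let $k\ge r\ge3$ and $p,t\ge 0$ be integers and let $\pi\in\mathbb{C}_{<}(k,r|p,t)$ with $\pi^{(2)}_p\ge 2t+6$. Then $2t+2$ and $2t+4$ do not both occur as parts of $\pi$.
   Context: A partition $\pi=(\pi_1,\dots,\pi_\ell)$ is a finite non-increasing sequence of positive integers; ''$a$ occurs in $\pi$'' means $a=\pi_i$ for some $i$. Göllnitz–Gordon marking: $GG(\pi)$ assigns a positive integer (mark) to each part, processing the parts from smallest to largest; $\pi_i$ receives the smallest positive integer different from the marks of all parts $\pi_g$ with $g>i$ and $\pi_i-\pi_g\le 2$, where $\pi_i-\pi_g<2$ is required when $\pi_i$ is odd. An ''$r$-marked part $a$'' is a part equal to $a$ with mark $r$. $N_i(\pi)$ is the number of parts with mark $i$; $\pi^{(i)}_1\ge\dots\ge\pi^{(i)}_{N_i(\pi)}$ are the parts with mark $i$, with $\pi^{(i)}_0=+\infty$, $\pi^{(i)}_{N_i(\pi)+1}=-\infty$. $\mathbb{C}(k,r)$: partitions with (i) no odd part repeated; (ii) $\pi_i\ge\pi_{i+k-1}+2$ for $1\le i\le\ell-k+1$, strict if $\pi_i$ even; (iii) at most $r-1$ parts $\le 2$. Starting types: for $\pi\in\mathbb{C}(k,r)$ with $N_2=N_2(\pi)\ge1$, let $l$ be the largest integer in $\{0,\dots,N_2\}$ such that no odd part of $\pi$ is $\ge\pi^{(2)}_l$; for $l<i\le N_2$, $\pi^{(2)}_i$ has type $s_{-1}$. For $b=1,\dots,l$ in increasing order, type and auxiliary $\sigma_b$: for $b=1$: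 Case 1: 1-marked part $\pi^{(2)}_1-1$ exists and $\pi^{(2)}_1+2$ does not occur: type $s_0$, $\sigma_1=\pi^{(2)}_1-1$; Case 2: 1-marked $\pi^{(2)}_1-2$ exists and $\pi^{(2)}_1+2$ does not occur: type $s_1$, $\sigma_1=\pi^{(2)}_1-2$; Case 3: 1-marked $\pi^{(2)}_1+2$ exists: type $s_2$, $\sigma_1=\pi^{(2)}_1+2$; Case 4: 1-marked $\pi^{(2)}_1$ exists: type $s_3$, $\sigma_1=\pi^{(2)}_1$. For $2\le b\le l$: Case 1: 1-marked $\pi^{(2)}_b-1$ exists and, if a 1-marked $\pi^{(2)}_b+2$ exists, $\sigma_{b-1}=\pi^{(2)}_b+2$: type $s_0$, $\sigma_b=\pi^{(2)}_b-1$; Case 2: same with $\pi^{(2)}_b-2$: type $s_1$, $\sigma_b=\pi^{(2)}_b-2$; Case 3: 1-marked $\pi^{(2)}_b+2$ exists and $\sigma_{b-1}\ne\pi^{(2)}_b+2$: type $s_2$, $\sigma_b=\pi^{(2)}_b+2$; Case 4: 1-marked $\pi^{(2)}_b$ exists: type $s_3$, $\sigma_b=\pi^{(2)}_b$. $\mathbb{C}_{<}(k,r|p,t)$: the set of $\pi\in\mathbb{C}(k,r)$ such that (1) no odd part is $\ge 2t+1$; (2) $\pi^{(2)}_{p+1}<2t+1<\pi^{(2)}_p$ (in particular $p\le N_2(\pi)$); (3) if $\pi^{(2)}_p=2t+2$ then it is of starting type $s_2$ or $s_3$; (4) if $\pi^{(2)}_{p+1}=2t$ then it is of starting type $s_0$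 or $s_1$. *)

(* Defs.v *)
From mathcomp Require Import all_boot.
Set Implicit Arguments. Unset Strict Implicit. Unset Printing Implicit Defensive.

(* A partition: a finite non-increasing sequence of positive integers,
   pi = [:: pi_1; ...; pi_l] (pi_i is  nth 0 s (i-1)). *)
Definition is_partition (s : seq nat) : Prop :=
  sorted (fun a b => b <= a) s /\ all (fun a => 0 < a) s.

Definition mex_pos (L : seq nat) : nat :=
  head 1 [seq n <- iota 1 (size L).+1 | n \notin L].

(* Goellnitz-Gordon marking: gg s is the list of marks, aligned with s. *)
Fixpoint gg (s : seq nat) : seq nat :=
  match s with
  | [::] => [::]
  | x :: r =>
      let mr := gg r in
      mex_pos [seq ym.2 | ym <- zip r mr &
                 (x - ym.1 <= 2) && (odd x ==> (x - ym.1 < 2))] :: mr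
  end.

Definition marked_parts (s : seq nat) (i : nat) : seq nat :=
  [seq xm.1 | xm <- zip s (gg s) & xm.2 == i].

Definition Nmark (s : seq nat) (i : nat) : nat := size (marked_parts s i).

Definition marked (s : seq nat) (r a : nat) : bool := (a, r) \in zip s (gg s).

Inductive xnat := Pinf | Fin of nat | Minf.

Definition xlt (x y : xnat) : Prop :=
  match x, y with
  | Minf, Minf => False
  | Minf, _ => True
  | Fin a, Fin b => a < b
  | Fin _, Pinf => True
  | Fin _, Minf => False
  | Pinf, _ => False
  end.

Definition xle (x y : xnat) : Prop := x = y \/ xlt x y.

Definition piM (s : seq nat) (i j : nat) : xnat :=
  if j == 0 then Pinf
  else if j <= Nmark s i then Fin (nth 0 (marked_parts s i) j.-1)
  else Minf.

Definition inC (k r : nat) (s : seq nat) : Prop :=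
  is_partition s /\
  (forall a, a \in s -> odd a -> count_mem a s = 1) /\
  (* (ii) pi_i >= pi_{i+k-1} + 2, strictly if pi_i even (0-based index i) *)
  (forall i, i + k.-1 < size s ->
     if odd (nth 0 s i) then nth 0 s (i + k.-1) + 2 <= nth 0 s i
     else nth 0 s (i + k.-1) + 2 < nth 0 s i) /\
  count (fun a => a <= 2) s <= r.-1.

Inductive stype := s_m1 | s_0 | s_1 | s_2 | s_3.

(* one step of the case analysis for the part x = pi^(2)_b;
   [first] is b = 1, [prev] is sigma_(b-1) (None if undefined).
   The four cases are mutually exclusive. *)
Definition st_step (s : seq nat) (first : bool) (prev : option nat) (x : nat)
  : option (stype * nat) :=
  let m1 := marked s 1 in
  if first then
    if m1 x.-1 && (x.+2 \notin s) then Some (s_0, x.-1)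
    else if m1 (x - 2) && (x.+2 \notin s) then Some (s_1, x - 2)
    else if m1 x.+2 then Some (s_2, x.+2)
    else if m1 x then Some (s_3, x)
    else None
  else match prev with
  | None => None
  | Some sg =>
    let c12 := m1 x.+2 ==> (sg == x.+2) in
    if m1 x.-1 && c12 then Some (s_0, x.-1)
    else if m1 (x - 2) && c12 then Some (s_1, x - 2)
    else if m1 x.+2 && (sg != x.+2) then Some (s_2, x.+2)
    else if m1 x then Some (s_3, x)
    else None
  end.

Fixpoint st_types (s : seq nat) (first : bool) (prev : option nat) (xs : seq nat)
  : seq (option stype) :=
  match xs with
  | [::] => [::]
  | x :: xs' =>
    match st_step s first prev x with
    | Some (ty, sg) => Some ty :: st_types s false (Some sg) xs'
    | None => None :: st_types s false None xs'
    end
  end.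

(* l : the largest l in {0..N_2} such that no odd part is >= pi^(2)_l *)
Definition l_good (s : seq nat) (l : nat) : bool :=
  (l == 0) || ~~ has (fun a => odd a && (nth 0 (marked_parts s 2) l.-1 <= a)) s.

Definition l_index (s : seq nat) : nat :=
  last 0 [seq j <- iota 0 (Nmark s 2).+1 | l_good s j].

(* starting type of pi^(2)_j (1 <= j <= N_2); None = no case applies *)
Definition start_type (s : seq nat) (j : nat) : option stype :=
  if l_index s < j then Some s_m1
  else nth None (st_types s true None (take (l_index s) (marked_parts s 2))) j.-1.

Definition inC_lt (k r p t : nat) (s : seq nat) : Prop :=
  inC k r s /\
  (forall a, a \in s -> odd a -> a < 2 * t + 1) /\
  xlt (piM s 2 p.+1) (Fin (2 * t + 1)) /\ xlt (Fin (2 * t + 1)) (piM s 2 p) /\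
  (piM s 2 p = Fin (2 * t + 2) ->
     start_type s p = Some s_2 \/ start_type s p = Some s_3) /\
  (piM s 2 p.+1 = Fin (2 * t) ->
     start_type s p.+1 = Some s_0 \/ start_type s p.+1 = Some s_1).

(* Main.v *)
Require Import Defs.
From mathcomp Require Import all_boot.
From mathcomp Require Import zify.
Set Implicit Arguments. Unset Strict Implicit.

Lemma has_notin (L : seq nat) : has (fun n => n \notin L) (iota 1 (size L).+1).
Proof.
case: (boolP (has _ _)) => // /hasPn H.
have : size (iota 1 (size L).+1) <= size L.
  apply: uniq_leq_size; first exact: iota_uniq.
  by move=> x /H; rewrite negbK.
by rewrite size_iota ltnn.
Qed.

Lemma head_filter_iota (P : pred nat) a m d n :
  has P (iota a m) -> a <= n -> n < head d [seq x <- iota a m | P x] -> ~~ P n.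
Proof.
elim: m a => [|m IH] a //=; rewrite -/(iota a.+1 m).
case: ifP => Pa /=.
  by move=> _ an na; move: (leq_ltn_trans an na); rewrite ltnn.
move=> hs; rewrite leq_eqVlt; case/orP => [/eqP <-|an]; first by rewrite Pa.
exact: IH.
Qed.

Lemma mex_in (L : seq nat) : mex_pos L \in [seq n <- iota 1 (size L).+1 | n \notin L].
Proof.
rewrite /mex_pos; have := has_notin L; rewrite has_filter.
by case: [seq _ <- _ | _] => //= x r _; rewrite inE eqxx.
Qed.

Lemma mex_notin L : mex_pos L \notin L.
Proof. by have := mex_in L; rewrite mem_filter => /andP[]. Qed.

Lemma mex_ge1 L : 0 < mex_pos L.
Proof. by have := mex_in L; rewrite mem_filter mem_iota => /and3P[]. Qed.

Lemma mex_below L n : 0 < n -> n < mex_pos L -> n \in L.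
Proof.
move=> n0 nm; have := head_filter_iota (has_notin L) n0 nm.
by rewrite negbK.
Qed.

Lemma size_gg s : size (gg s) = size s.
Proof. by elim: s => //= x r ->. Qed.

Lemma drop_gg s i : gg (drop i s) = drop i (gg s).
Proof.
elim: s i => [|x r IH] [|i] //=.
Qed.

Definition C (x y : nat) : bool := (x - y <= 2) && (odd x ==> (x - y < 2)).

Definition V s i := [seq ym.2 | ym <- zip (drop i.+1 s) (drop i.+1 (gg s)) & C (nth 0 s i) ym.1].

Lemma gg_nth s i : i < size s -> nth 0 (gg s) i = mex_pos (V s i).
Proof.
move=> hi; have := drop_gg s i.
rewrite (drop_nth 0 hi) (drop_nth 0 (_ : i < size (gg s))) ?size_gg //=.
by case=> <- _; rewrite /V drop_gg.
Qed.

Lemma memV s i v : v \in V s i <-> exists j, [/\ i < j, j < size s, C (nth 0 s i) (nth 0 s j) & nth 0 (gg s) j = v].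
Proof.
rewrite /V; split.
  case/mapP => ym; rewrite mem_filter => /andP[Cy] /(nthP (0,0)) [k].
  rewrite size_zip !size_drop size_gg minnn => hk.
  rewrite nth_zip ?size_drop ?size_gg // !nth_drop => hy; rewrite -hy /= in Cy * => ->.
  exists (i.+1 + k); split => //; first by rewrite ltnS leq_addr.
    by rewrite -ltn_subRL.
move=> [j [ij js Cj <-]].
apply/mapP; exists (nth 0 s j, nth 0 (gg s) j) => //.
rewrite mem_filter Cj /=.
apply/(nthP (0,0)); exists (j - i.+1).
  rewrite size_zip !size_drop size_gg minnn; apply: ltn_sub2r => //; exact: leq_ltn_trans ij js.
by rewrite nth_zip ?size_drop ?size_gg // !nth_drop subnKC.
Qed.

Lemma M1 s i j : i < j -> j < size s -> C (nth 0 s i) (nth 0 s j) ->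
  nth 0 (gg s) i != nth 0 (gg s) j.
Proof.
move=> ij js Cj; rewrite gg_nth ?(ltn_trans ij) //.
apply/eqP => E; have := mex_notin (V s i); rewrite E.
by move/negP; apply; apply/memV; exists j.
Qed.

Lemma M2 s i n : i < size s -> 0 < n -> n < nth 0 (gg s) i ->
  exists j, [/\ i < j, j < size s, C (nth 0 s i) (nth 0 s j) & nth 0 (gg s) j = n].
Proof.
move=> hi n0; rewrite gg_nth // => nm; apply/memV; exact: mex_below.
Qed.

Lemma M3 s i : i < size s -> 0 < nth 0 (gg s) i.
Proof. by move=> hi; rewrite gg_nth // mex_ge1. Qed.

Lemma markedP s r a : marked s r a <-> exists j, [/\ j < size s, nth 0 s j = a & nth 0 (gg s) j = r].
Proof.
rewrite /marked; split.
  case/(nthP (0,0)) => j; rewrite size_zip size_gg minnn => js.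
  rewrite nth_zip ?size_gg //; case => <- <-; by exists j.
case=> j [js <- <-]; apply/(nthP (0,0)); exists j.
  by rewrite size_zip size_gg minnn.
by rewrite nth_zip ?size_gg.
Qed.

Lemma marked_partsP s r a : a \in marked_parts s r <-> marked s r a.
Proof.
rewrite /marked_parts /marked; split.
  by case/mapP => [[x y]]; rewrite mem_filter /= => /andP[/eqP -> H] ->.
by move=> H; apply/mapP; exists (a, r); rewrite // mem_filter eqxx.
Qed.

Lemma marked_parts_sorted s r : sorted (fun a b => b <= a) s -> sorted (fun a b => b <= a) (marked_parts s r).
Proof.
move=> Hs; apply: (subseq_sorted _ _ Hs).
  by move=> x y z yx zy; apply: leq_trans zy yx.
rewrite /marked_parts.
have {3}-> : s = [seq xm.1 | xm <- zip s (gg s)] by symmetry; apply: unzip1_zip; rewrite size_gg.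
by rewrite map_subseq // filter_subseq.
Qed.

Lemma sorted_nth (s : seq nat) i j : sorted (fun a b => b <= a) s -> i <= j -> j < size s -> nth 0 s j <= nth 0 s i.
Proof.
move=> Hs ij js.
apply: (sorted_leq_nth (leT := fun a b => b <= a)) => //.
- by move=> x y z yx zy; apply: leq_trans zy yx.
- by rewrite inE (leq_ltn_trans ij).
Qed.

Lemma st_step_s01 s f pr x ty sg : st_step s f pr x = Some (ty, sg) ->
  (ty = s_0 -> marked s 1 x.-1) /\ (ty = s_1 -> marked s 1 (x - 2)).
Proof.
rewrite /st_step; case: f; last case: pr => [sg'|] //.
- do 4 (case: ifP => [H|_]; first by case=> <- _; split => e; try discriminate e; case/andP: H).
  by [].
- do 4 (case: ifP => [H|_]; first by case=> <- _; split => e; try discriminate e; case/andP: H).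
  by [].
Qed.

Lemma st_types_s01 s f pr xs q :
  (nth None (st_types s f pr xs) q = Some s_0 -> marked s 1 (nth 0 xs q).-1) /\
  (nth None (st_types s f pr xs) q = Some s_1 -> marked s 1 (nth 0 xs q - 2)).
Proof.
elim: xs f pr q => [|x xs IH] f pr q /=; first by rewrite nth_nil.
case E: (st_step s f pr x) => [[ty sg]|]; case: q => [|q] /=.
- by have [H0 H1] := st_step_s01 E; split => -[] e; [exact: H0 | exact: H1].
- exact: IH.
- by [].
- exact: IH.
Qed.

Lemma ord_of_lt (s : seq nat) i j : sorted (fun a b => b <= a) s -> i < size s -> j < size s ->
  nth 0 s j < nth 0 s i -> i < j.
Proof.
move=> Hs hi hj lt; rewrite ltnNge; apply/negP => ji.
by have := sorted_nth Hs ji hi; rewrite leqNgt lt.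
Qed.

Theorem corollary2p5 (k r p t : nat) (s : seq nat) :
  3 <= r -> r <= k ->
  inC_lt k r p t s ->
  xle (Fin (2 * t + 6)) (piM s 2 p) ->
  ~ ((2 * t + 2 \in s) /\ (2 * t + 4 \in s)).
Proof.
move=> r3 rk [[[Hsort Hpos] [Hodd1 [Hk Hr]]] [Hodd [H2a [H2b [H3 H4]]]]] Hp [I2 I4].
have LS := marked_parts_sorted 2 Hsort.
have Lhi : forall q, q < size (marked_parts s 2) -> q < p -> 2 * t + 6 <= nth 0 (marked_parts s 2) q.
  move=> q qL qp; move: Hp H2b; rewrite /piM.
  have -> : (p == 0) = false by apply/negbTE; rewrite -lt0n (leq_ltn_trans _ qp).
  rewrite /Nmark; case: ifP => pL; last by [].
  move=> Hp _.
  have h : 2 * t + 6 <= nth 0 (marked_parts s 2) p.-1.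
    by case: Hp => [[->]|] //= /ltnW.
  have p0 : 0 < p by apply: leq_ltn_trans qp.
  apply: (leq_trans h); apply: sorted_nth => //.
    by rewrite -ltnS prednK.
  by rewrite prednK.
have Llo : forall q, q < size (marked_parts s 2) -> p <= q ->
    nth 0 (marked_parts s 2) q <= nth 0 (marked_parts s 2) p /\
    nth 0 (marked_parts s 2) p < 2 * t + 1 /\ piM s 2 p.+1 = Fin (nth 0 (marked_parts s 2) p).
  move=> q qL pq.
  have pL : p.+1 <= Nmark s 2 by rewrite /Nmark (leq_ltn_trans pq qL).
  have E : piM s 2 p.+1 = Fin (nth 0 (marked_parts s 2) p) by rewrite /piM /= pL.
  split; first exact: sorted_nth.
  by move: H2a; rewrite E /=.
have win : forall j, j < size s -> nth 0 (gg s) j = 2 -> 2 * t + 1 <= nth 0 s j -> nth 0 s j < 2 * t + 6 -> False.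
  move=> j js mj lo hi.
  have : nth 0 s j \in marked_parts s 2 by apply/marked_partsP/markedP; exists j.
  case/(nthP 0) => q qL Eq.
  case: (ltnP q p) => qp.
    by have := Lhi q qL qp; rewrite Eq leqNgt hi.
  have [h1 [h2 _]] := Llo q qL qp.
  by move: (leq_ltn_trans h1 h2); rewrite Eq ltnNge lo.
have memp : forall j, j < size s -> nth 0 s j \in s by move=> j js; exact: mem_nth.
have st1 : forall i, i < size s -> nth 0 s i = 2 * t + 4 -> nth 0 (gg s) i = 1.
  move=> i iS xi.
  have m1 := M3 iS.
  case E: (nth 0 (gg s) i) m1 => [|[|[|m]]] // _.
    by move: (win i iS E); rewrite xi; lia.
  have m2 : 2 < nth 0 (gg s) i by rewrite E.
  have [j [ij js Cj mj]] := M2 iS (isT : 0 < 2) m2.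
  have le := sorted_nth Hsort (ltnW ij) js.
  move: Cj; rewrite /C xi => /andP[c1 _].
  exfalso; apply: (win j js mj); lia.
have [i4 i4s x4] : exists2 i, i < size s & nth 0 s i = 2 * t + 4 by case/(nthP 0): I4 => i; exists i.
have st2 : forall j, j < size s -> nth 0 s j = 2 * t + 2 -> nth 0 (gg s) j != 1.
  move=> j js xj.
  have ij : i4 < j by apply: (ord_of_lt Hsort i4s js); rewrite x4 xj; lia.
  have := M1 ij js; rewrite x4 xj st1 // eq_sym; apply.
  by rewrite /C; apply/andP; split; [lia | rewrite oddD oddM /=].
have [j2 j2s x2] : exists2 i, i < size s & nth 0 s i = 2 * t + 2 by case/(nthP 0): I2 => i; exists i.
have m3 : 2 < nth 0 (gg s) j2.
  have := M3 j2s; have := st2 j2 j2s x2.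
  case E: (nth 0 (gg s) j2) => [|[|[|m]]] // _ _.
  by move: (win j2 j2s E); rewrite x2; lia.
have near : forall n, 0 < n -> n < 3 -> exists a, [/\ a < size s, nth 0 s a = 2 * t & nth 0 (gg s) a = n].
  move=> n n0 n3.
  have [a [ja aS Ca ma]] := M2 j2s n0 (leq_trans n3 m3).
  exists a; split => //.
  have le := sorted_nth Hsort (ltnW ja) aS.
  move: Ca; rewrite /C x2 => /andP[c1 _].
  have : nth 0 s a != 2 * t + 1.
    apply/negP => /eqP e; have := Hodd _ (memp a aS); rewrite e oddD oddM /= ltnn; by move/(_ isT).
  have : nth 0 s a != 2 * t + 2.
    apply/negP => /eqP e.
    case: n n0 n3 ma => [|[|[|n]]] // _ _ ma.
      by have := st2 a aS e; rewrite ma.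
    by apply: (win a aS ma); rewrite e; lia.
  move=> /eqP h1 /eqP h2; lia.
have [a [aS xa ma]] := near 1 isT isT.
have [b [bs xb mb]] := near 2 isT isT.
have : 2 * t \in marked_parts s 2 by apply/marked_partsP/markedP; exists b.
case/(nthP 0) => q qL Eq.
case: (ltnP q p) => qp.
  by have := Lhi q qL qp; rewrite Eq; lia.
have [h1 [h2 h3]] := Llo q qL qp.
have Ep : nth 0 (marked_parts s 2) p = 2 * t by move: h1 h2; rewrite Eq; lia.
have pL : p < size (marked_parts s 2) by apply: leq_ltn_trans qp qL.
rewrite Ep in h3.
have := H4 h3; rewrite /start_type.
case: ifP => [_ [] //|]; rewrite ltnS => /negbT; rewrite -ltnNge => pl /=.
have [T0 T1] := st_types_s01 s true None (take (l_index s) (marked_parts s 2)) p.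
rewrite nth_take // Ep in T0 T1.
have t0 : 0 < 2 * t by have := allP Hpos _ (memp a aS); rewrite xa.
have fin : forall y, marked s 1 y -> y < 2 * t -> 2 * t - y <= 2 -> False.
  move=> y /markedP [c [cs xc mc]] yl yd.
  have ac : a < c by apply: (ord_of_lt Hsort aS cs); rewrite xa xc.
  suff hC : C (nth 0 s a) (nth 0 s c) by have := M1 ac cs hC; rewrite ma mc eqxx.
  by rewrite /C xa xc yd oddM /=.
case=> /[dup] e; [move/T0 | move/T1] => /fin; apply; lia.
Qed.
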